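(* Let $V$ be a real vector space, $R:V\to\mathbb{R}\cup\{+\infty\}$ and $f:\mathbb{R}^m\to\mathbb{R}\cup\{+\infty\}$ convex, $\Phi:V\to\mathbb{R}^m$ linear, and let $p$ be a minimizer of $R+f\circ\Phi$ with finite minimal value $M=R(p)+f(\Phi p)$. Let $\mathrm{epi}(R)=\{(u,r)\in V\times\mathbb{R}: R(u)\le r\}$ and $\mathrm{hypo}(M-f\circ\Phi)=\{(u,r)\in V\times\mathbb{R}: M-f(\Phi u)\ge r\}$; the point $(p,R(p))$ lies in both. Let $\vec E$ and $\vec H$ be the linear subspaces of $V\times\mathbb{R}$ parallel to the affine hulls of $F((p,R(p)),\mathrm{epi}(R))$ and $F((p,R(p)),\mathrm{hypo}(M-f\circ\Phi))$ respectively. Then $\mathrm{codim}_{V\times\mathbb{R}}(\vec E+\vec H)\ge 1$. If moreover both faces $F((p,R(p)),\mathrm{epi}(R))$ and $F((p,R(p)),\mathrm{hypo}(M-f\circ\Phi))$ are horizontal and ($R(p)>\inf_V R$ or $f(\Phi p)>\inf_V f\circ\Phi$), then $\mathrm{codim}_{V\times\mathbb{R}}(\vec E+\vec H)\ge 2$.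
   Context: For a convex set $C$, a face is a convex subset $F\subseteq C$ such that every open segment $]x,y[=\{tx+(1-t)y:0<t<1\}$ ($x\neq y$) contained in $C$ which intersects $F$ is contained in $F$; $F(x,C)$ denotes the intersection of all faces of $C$ containing $x$. For a convex set $C\subseteq V\times\mathbb{R}$ and $(x,r)\in C$, the face $F((x,r),C)$ is horizontal if its affine hull is contained in $V\times\{r\}$, and oblique otherwise. *)

(* Defs.v *)
(* The base field is an arbitrary real field R (realFieldType);
   this contains the case of the real numbers. *)
From HB Require Import structures.
From mathcomp Require Import all_boot all_order all_algebra.
Set Implicit Arguments. Unset Strict Implicit. Unset Printing Implicit Defensive.
Import Order.TTheory GRing.Theory Num.Theory.
Local Open Scope ring_scope.

Section Defs.
Variable R : realFieldType.

(* Extended values R ∪ {+oo}: [Some r] is the finite value r, [None] is +oo. *)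
Definition ele (x y : option R) : bool :=
  match x, y with
  | _, None => true
  | None, Some _ => false
  | Some a, Some b => a <= b
  end.

Definition convex_fun (W : lmodType R) (g : W -> option R) : Prop :=
  forall (x y : W) (t rx ry : R), 0 <= t -> t <= 1 ->
    g x = Some rx -> g y = Some ry ->
    ele (g (t *: x + (1 - t) *: y)) (Some (t * rx + (1 - t) * ry)).

Variable W : lmodType R.

Definition convex_set (C : W -> Prop) : Prop :=
  forall (x y : W) (t : R), C x -> C y -> 0 <= t -> t <= 1 ->
    C (t *: x + (1 - t) *: y).

Definition segpt (x y : W) (t : R) : W := t *: x + (1 - t) *: y.

Definition is_face (C F : W -> Prop) : Prop :=
  (forall z, F z -> C z) /\ convex_set F /\
  forall x y : W, x <> y ->
    (forall t : R, 0 < t -> t < 1 -> C (segpt x y t)) ->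
    (exists t : R, [/\ 0 < t, t < 1 & F (segpt x y t)]) ->
    (forall t : R, 0 < t -> t < 1 -> F (segpt x y t)).

Definition minface (x : W) (C : W -> Prop) : W -> Prop :=
  fun z => forall F, is_face C F -> F x -> F z.

Definition aff_hull (S : W -> Prop) : W -> Prop :=
  fun z => exists (n : nat) (s : 'I_n -> W) (l : 'I_n -> R),
    [/\ forall i, S (s i), \sum_i l i = 1 & z = \sum_i l i *: s i].

(* linear subspace parallel to the affine hull of S (S nonempty) *)
Definition dir (S : W -> Prop) : W -> Prop :=
  fun z => exists a b, [/\ aff_hull S a, aff_hull S b & z = a - b].

Definition sum_sub (U1 U2 : W -> Prop) : W -> Prop :=
  fun z => exists u1 u2, [/\ U1 u1, U2 u2 & z = u1 + u2].

(* codim_W U >= k, i.e. dim (W / U) >= k: there are k vectors whose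
   classes modulo U are linearly independent. *)
Definition codim_ge (U : W -> Prop) (k : nat) : Prop :=
  exists w : 'I_k -> W,
    forall c : 'I_k -> R, U (\sum_i c i *: w i) -> forall i, c i = 0.

End Defs.

Section Graphs.
Variables (R : realFieldType) (V : lmodType R).

Definition epi (g : V -> option R) : V * R^o -> Prop :=
  fun z => ele (g z.1) (Some z.2).

(* hypo(M - g) = {(u,r) : M - g(u) >= r}  (M - (+oo) = -oo) *)
Definition hypo_sub (M : R) (g : V -> option R) : V * R^o -> Prop :=
  fun z => exists b, g z.1 = Some b /\ z.2 <= M - b.

Definition horizontal (r : R) (F : V * R^o -> Prop) : Prop :=
  forall z, aff_hull F z -> z.2 = r.
End Graphs.

(* Main.v *)
Require Import Defs.
From HB Require Import structures.
From mathcomp Require Import all_boot all_order all_algebra.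
From mathcomp Require Import ring lra.
Import Order.TTheory GRing.Theory Num.Theory.
Local Open Scope ring_scope.

Section Gen.
Variables (R : realFieldType) (W : lmodType R).
Implicit Types (x a b d : W).

Lemma comb x a b (t : R) : t *: (x + a) + (1 - t) *: (x + b) = x + (t *: a + (1 - t) *: b).
Proof.
rewrite !scalerDr addrACA -scalerDl.
by rewrite [t + _]addrC subrK scale1r.
Qed.

Lemma segE (u p : W) (s : R) : s *: u + (1 - s) *: p = p + s *: (u - p).
Proof.
by rewrite scalerBl scale1r scalerBr addrCA.
Qed.

Variables (C : W -> Prop) (x0 : W).
Hypothesis (Cc : convex_set C) (Cx : C x0).

Definition Dset (d : W) := exists e : R, 0 < e /\
  forall s, 0 <= s -> s <= e -> C (x0 + s *: d) /\ C (x0 - s *: d).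

Lemma down d e s : 0 < e -> C (x0 + e *: d) -> 0 <= s -> s <= e -> C (x0 + s *: d).
Proof.
move=> e0 Ce s0 se.
have := @Cc _ _ (s / e) Ce Cx.
rewrite -[X in _ + _ *: X]addr0 comb scaler0 addr0 scalerA mulrVK ?unitfE ?gt_eqF //.
apply; first by rewrite divr_ge0 // ltW.
by rewrite ler_pdivrMr // mul1r.
Qed.

Lemma D_of d e : 0 < e -> C (x0 + e *: d) -> C (x0 - e *: d) -> Dset d.
Proof.
move=> e0 C1 C2; exists e; split=> // s s0 se; split; first exact: (@down d e s).
by rewrite -scalerN; apply: (@down (- d) e s) => //; rewrite scalerN.
Qed.

Lemma D0 : Dset 0.
Proof. by exists 1; split=> // s _ _; rewrite scaler0 addr0 subr0. Qed.

Lemma Dopp d : Dset d -> Dset (- d).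
Proof.
by case=> e [e0 H]; exists e; split=> // s s0 se; rewrite scalerN opprK; case: (H s s0 se).
Qed.

Lemma Dadd d1 d2 : Dset d1 -> Dset d2 -> Dset (d1 + d2).
Proof.
case=> e1 [e10 H1] [e2 [e20 H2]].
exists (Num.min e1 e2 / 2); split.
  by rewrite divr_gt0 // lt_min e10.
move=> s s0 se.
have [s2e1 s2e2] : s * 2 <= e1 /\ s * 2 <= e2.
  by move: se; rewrite ler_pdivlMr // le_min => /andP[].
have s20 : 0 <= s * 2 by lra.
case: (H1 _ s20 s2e1) => A1 B1; case: (H2 _ s20 s2e2) => A2 B2.
have h12 : (0:R) <= 2^-1 by rewrite invr_ge0.
have h12' : (2:R)^-1 <= 1 by rewrite invf_le1 //; lra.
have hk : forall u1 u2 : W, (2:R)^-1 *: ((s * 2) *: u1) + (1 - 2^-1) *: ((s * 2) *: u2) = s *: (u1 + u2).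
  by move=> u1 u2; rewrite !scalerA scalerDr; congr (_ *: _ + _ *: _); field.
split.
  by have := @Cc _ _ _ A1 A2 h12 h12'; rewrite comb hk.
have := @Cc _ _ _ B1 B2 h12 h12'; rewrite -!scalerN comb hk.
by rewrite -opprD.
Qed.

Lemma Dscale k d : Dset d -> Dset (k *: d).
Proof.
move=> Dd.
have pos : forall k, 0 < k -> Dset (k *: d).
  move=> k' k0; case: Dd => e [e0 H]; exists (e / k'); split; first exact: divr_gt0.
  move=> s s0 se; rewrite scalerA; apply: H; first exact: mulr_ge0 (ltW _).
  by rewrite -ler_pdivlMr.
case: (ltrgtP k 0) => hk.
- by rewrite -[k]opprK scaleNr; apply: Dopp; apply: pos; rewrite oppr_gt0.
- exact: pos.
- by rewrite hk scale0r; exact: D0.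
Qed.

Lemma Dsum n (F : 'I_n -> W) : (forall i, Dset (F i)) -> Dset (\sum_i F i).
Proof.
move=> H; apply: (big_ind Dset) => //; [exact: D0 | exact: Dadd].
Qed.

Definition G z := C z /\ Dset (z - x0).

Lemma G_face : is_face C G.
Proof.
split; first by move=> z [].
split.
  move=> y z t [Cy Dy] [Cz Dz] t0 t1; split; first exact: Cc.
  have -> : t *: y + (1 - t) *: z - x0 = t *: (y - x0) + (1 - t) *: (z - x0).
    have E := comb x0 (y - x0) (z - x0) t.
    rewrite [x0 + (y - x0)]addrC [x0 + (z - x0)]addrC !subrK in E.
    by rewrite E addrC addKr.
  by apply: Dadd; apply: Dscale.
move=> y z yz Cseg [t0 [t00 t01 [Cw Dw]]] t t0' t1'.
split; first exact: Cseg.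
set w := segpt y z t0.
set e := y - z.
have sh : forall t', segpt y z t' = w + (t' - t0) *: e.
  by move=> t'; rewrite /w /e /segpt !segE -addrA -scalerDl [t0 + _]addrC subrK.
have De : Dset e.
  set r := Num.min t0 (1 - t0) / 2.
  have r0 : 0 < r by rewrite /r divr_gt0 // lt_min t00 subr_gt0.
  have rt0 : r < t0.
    rewrite /r; have : Num.min t0 (1 - t0) <= t0 by rewrite ge_min lexx.
    lra.
  have rt1 : r < 1 - t0.
    rewrite /r; have : Num.min t0 (1 - t0) <= 1 - t0 by rewrite ge_min lexx orbT.
    lra.
  have C1 : C (w + r *: e).
    have hr : t0 + r - t0 = r by lra.
    have := Cseg (t0 + r); rewrite sh hr; apply; lra.
  have C2 : C (w - r *: e).
    have hr : t0 - r - t0 = - r by lra.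
    have := Cseg (t0 - r); rewrite sh hr scaleNr; apply; lra.
  case: Dw => ep [ep0 Hep].
  case: (Hep ep (ltW ep0) (lexx _)) => _ Cm.
  set l := ep / (1 + ep).
  have l0 : 0 <= l by rewrite /l divr_ge0 // ?addr_ge0 // ltW.
  have l1 : l <= 1 by rewrite /l ler_pdivrMr ?mul1r; lra.
  have key : forall sg : W, l *: (w - x0 + sg) + (1 - l) *: (- (ep *: (w - x0))) = l *: sg.
    move=> sg; rewrite scalerDr -scaleNr scalerA addrAC -scalerDl.
    have -> : l + (1 - l) * - ep = 0 by rewrite /l; field; rewrite gt_eqF //; lra.
    by rewrite scale0r add0r.
  apply: (@D_of _ (l * r)); first by apply: mulr_gt0 => //; rewrite /l divr_gt0 // ; lra.
  - have := @Cc _ _ _ C1 Cm l0 l1.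
    have -> : w + r *: e = x0 + (w - x0 + r *: e) by rewrite addrA [x0 + _]addrC subrK.
    by rewrite comb key scalerA.
  - have := @Cc _ _ _ C2 Cm l0 l1.
    have -> : w - r *: e = x0 + (w - x0 + - (r *: e)) by rewrite addrA [x0 + _]addrC subrK.
    by rewrite comb key scalerN scalerA.
have -> : segpt y z t - x0 = (t - t0) *: e + (w - x0).
  by rewrite sh addrAC addrC.
by apply: Dadd => //; apply: Dscale.
Qed.

Lemma aff_D S : (forall z, S z -> Dset (z - x0)) -> forall z, aff_hull S z -> Dset (z - x0).
Proof.
move=> HS z [n [s [l [Ss sl ->]]]].
have -> : \sum_i l i *: s i - x0 = \sum_i l i *: (s i - x0).
  under [RHS]eq_bigr do rewrite scalerBr.
  by rewrite sumrB -scaler_suml sl scale1r.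
by apply: Dsum => i; apply: Dscale; apply: HS.
Qed.

Lemma dir_D S : (forall z, S z -> Dset (z - x0)) -> forall z, dir S z -> Dset z.
Proof.
move=> HS z [u [v [Hu Hv ->]]].
have -> : u - v = (u - x0) + - (v - x0) by rewrite opprB addrA subrK.
apply: Dadd; first exact: (@aff_D S HS u Hu).
by apply: Dopp; exact: (@aff_D S HS v Hv).
Qed.

Lemma minface_D z : dir (minface x0 C) z -> Dset z.
Proof.
apply: dir_D => y My.
have GY : G y.
  apply: My; first exact: G_face.
  by split => //; rewrite subrr; exact: D0.
by case: GY.
Qed.
End Gen.

Lemma eleS (R : realFieldType) (o : option R) r : ele o (Some r) -> exists r', o = Some r' /\ r' <= r.
Proof. by case: o => [r'|] //= h; exists r'. Qed.

Lemma arith1 (R : realFieldType) (r r1 r2 q c0 c' : R) :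
  r <= 2^-1 * r1 + (1 - 2^-1) * r2 -> r1 <= c0 -> r2 <= q * c' + (1 - q) * c0 ->
  0 < q * (c0 - c') -> r < c0.
Proof.
move=> h1 h2 h3 h4; lra.
Qed.

Section Main.
Variables (R : realFieldType) (V : lmodType R) (m : nat).

Lemma conv_comp (f : 'rV[R]_m -> option R) (Phi : {linear V -> 'rV[R]_m}) :
  convex_fun f -> convex_fun (fun u => f (Phi u)).
Proof.
move=> hf x y t rx ry t0 t1 hx hy.
by rewrite linearD !linearZ; apply: hf.
Qed.

Lemma epi_convex (h : V -> option R) : convex_fun h -> convex_set (epi h).
Proof.
move=> hc [x1 r1] [x2 r2] t /eleS [a1 [h1 l1]] /eleS [a2 [h2 l2]] t0 t1.
rewrite /epi /=.
have := hc x1 x2 t a1 a2 t0 t1 h1 h2.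
case: (h _) => [r|] //= hr.
apply: (le_trans hr).
simpl in l1, l2.
have : 0 <= t * (r1 - a1) by apply: mulr_ge0; lra.
have : 0 <= (1 - t) * (r2 - a2) by apply: mulr_ge0; lra.
have -> : t *: r1 = t * r1 by [].
have -> : (1 - t) *: r2 = (1 - t) * r2 by [].
lra.
Qed.

Lemma hypo_convex (M : R) (h : V -> option R) : convex_fun h -> convex_set (hypo_sub M h).
Proof.
move=> hc [x1 r1] [x2 r2] t [a1 [h1 l1]] [a2 [h2 l2]] t0 t1.
rewrite /hypo_sub /=.
have := hc x1 x2 t a1 a2 t0 t1 h1 h2.
case: (h _) => [r|] //= hr.
exists r; split => //.
simpl in l1, l2.
have : 0 <= t * (M - a1 - r1) by apply: mulr_ge0; lra.
have : 0 <= (1 - t) * (M - a2 - r2) by apply: mulr_ge0; lra.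
have -> : t *: r1 = t * r1 by [].
have -> : (1 - t) *: r2 = (1 - t) * r2 by [].
lra.
Qed.

Lemma gen_lemma (h : V -> option R) (p u y : V) (c0 c' k e : R) :
  convex_fun h -> h p = Some c0 -> h u = Some c' -> c' < c0 -> 0 < k -> 0 < e ->
  (forall s, 0 <= s -> s <= e -> exists r, h (p - s *: y) = Some r /\ r <= c0) ->
  exists t, [/\ 0 < t, t <= e & exists r, h (p + t *: (k *: (u - p) - y)) = Some r /\ r < c0].
Proof.
move=> hc hp hu cc k0 e0 Hs.
set t := Num.min e k^-1 / 2.
have mk : 0 < Num.min e k^-1 by rewrite lt_min e0 invr_gt0.
have t0 : 0 < t by rewrite /t divr_gt0.
have [me mk'] : Num.min e k^-1 <= e /\ Num.min e k^-1 <= k^-1.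
  by split; rewrite ge_min lexx ?orbT.
have t2e : t * 2 <= e by rewrite /t; lra.
have tk : t * 2 * k <= 1.
  have : t * 2 <= k^-1 by rewrite /t; lra.
  by rewrite -(ler_pM2r k0) mulVf ?gt_eqF.
have t20 : 0 <= t * 2 by lra.
have [r1 [h1 l1]] := Hs (t * 2) t20 t2e.
have tk0 : 0 <= t * 2 * k by apply: mulr_ge0; [apply: mulr_ge0; lra | lra].
have := hc u p (t * 2 * k) c' c0 tk0 tk hu hp.
rewrite segE; case E2 : (h _) => [r2|] //= l2.
have h12 : (0:R) <= 2^-1 by rewrite invr_ge0.
have h12' : (2:R)^-1 <= 1 by rewrite invf_le1 //; lra.
have := hc _ _ _ r1 r2 h12 h12' h1 E2.
rewrite comb.
have -> : 2^-1 *: - ((t * 2) *: y) + (1 - 2^-1) *: ((t * 2 * k) *: (u - p))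
          = t *: (k *: (u - p) - y).
  rewrite scalerN [2^-1 *: _]scalerA [(1 - 2^-1) *: _]scalerA [t *: (_ - _)]scalerBr [t *: (k *: _)]scalerA addrC.
  by congr (_ *: _ - _ *: _); field.
case Eh : (h _) => [r|] //= hr.
exists t; split => //; first lra.
exists r; split => //.
have P : 0 < t * 2 * k * (c0 - c') by apply: mulr_gt0; [apply: mulr_gt0; lra | lra].
exact: (@arith1 _ _ _ _ _ _ _ hr l1 l2 P).
Qed.
End Main.
Theorem mainTheorem4 (R : realFieldType) (V : lmodType R) (m : nat)
    (Rf : V -> option R) (f : 'rV[R]_m -> option R)
    (Phi : {linear V -> 'rV[R]_m}) (p : V) (a b : R) :
  convex_fun Rf -> convex_fun f ->
  Rf p = Some a -> f (Phi p) = Some b ->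
  (forall (u : V) (a' b' : R), Rf u = Some a' -> f (Phi u) = Some b' ->
     a + b <= a' + b') ->
  let M := a + b in
  let pt : V * R^o := (p, a) in
  let E := minface pt (epi Rf) in
  let H := minface pt (hypo_sub M (fun u => f (Phi u))) in
  codim_ge (sum_sub (dir E) (dir H)) 1 /\
  (horizontal a E -> horizontal a H ->
   ((exists (u : V) (a' : R), Rf u = Some a' /\ a' < a) \/
    (exists (u : V) (b' : R), f (Phi u) = Some b' /\ b' < b)) ->
   codim_ge (sum_sub (dir E) (dir H)) 2).
Proof.
move=> hR hf hRp hfp hmin M pt E H.
have hg : convex_fun (fun u => f (Phi u)) := @conv_comp _ _ _ _ Phi hf.
have Cepi : convex_set (epi Rf) := @epi_convex _ _ _ hR.
have Chyp : convex_set (hypo_sub M (fun u => f (Phi u))) := @hypo_convex _ _ M _ hg.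
have xepi : epi Rf pt by rewrite /epi /= hRp /=.
have xhyp : hypo_sub M (fun u => f (Phi u)) pt.
  by exists b; split => //=; rewrite /M; lra.
have DE : forall z, dir E z -> Dset _ _ (epi Rf) pt z := @minface_D _ _ _ _ Cepi xepi.
have DH : forall z, dir H z -> Dset _ _ (hypo_sub M (fun u => f (Phi u))) pt z :=
  @minface_D _ _ _ _ Chyp xhyp.
have sc : forall (x : R) (y : R^o), x *: y = x * y by [].
have K : forall z1 z2, epi Rf z1 -> hypo_sub M (fun u => f (Phi u)) z2 ->
    z1.1 = z2.1 -> z2.2 <= z1.2.
  move=> [q1 r1] [q2 r2] /eleS [a1 [h1 l1]] [b1 [h2 l2]] /= eq.
  rewrite /= -eq in h2.
  have := hmin _ _ _ h1 h2.
  rewrite /M in l2; simpl in l1, l2; lra.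
split.
  exists (fun _ => ((0:V), (1:R^o))).
  move=> c [u1 [u2 [Du1 Du2 Hs]]] i.
  rewrite big_ord1 in Hs.
  rewrite (ord1 i).
  have h1 := congr1 fst Hs; have h2 := congr1 snd Hs; simpl in h1, h2.
  have [e1 [e10 H1]] := DE _ Du1; have [e2 [e20 H2]] := DH _ Du2.
  set e := Num.min e1 e2.
  have e0 : 0 < e by rewrite lt_min e10.
  have [ee1 ee2] : e <= e1 /\ e <= e2 by split; rewrite /e ge_min lexx ?orbT.
  case: (H1 e (ltW e0) ee1) => P1 M1; case: (H2 e (ltW e0) ee2) => P2 M2.
  rewrite scaler0 in h1.
  have hu2 : u2.1 = - u1.1 by apply/eqP; rewrite -addr_eq0 addrC -h1.
  have k1 := K _ _ P1 M2; have k2 := K _ _ M1 P2.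
  rewrite /= hu2 scalerN opprK in k1 k2.
  have {}k1 := k1 erefl; have {}k2 := k2 erefl.
  rewrite /= !sc in k1 k2.
  rewrite sc mulr1 in h2.
  have : e * c ord0 = 0.
    rewrite h2 mulrDr; lra.
  by move/eqP; rewrite mulf_eq0 gt_eqF //= => /eqP.
move=> hE hH hex.
have horE : forall z, dir E z -> z.2 = 0.
  by move=> z [A [B [hA hB ->]]] /=; rewrite (hE _ hA) (hE _ hB) subrr.
have horH : forall z, dir H z -> z.2 = 0.
  by move=> z [A [B [hA hB ->]]] /=; rewrite (hH _ hA) (hH _ hB) subrr.
have [u Hu] : exists u, (exists a', Rf u = Some a' /\ a' < a) \/
                        (exists b', f (Phi u) = Some b' /\ b' < b).
  by case: hex => [[u Hu]|[u Hu]]; exists u; [left|right].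
have core : forall d1 d2 k, Dset _ _ (epi Rf) pt d1 ->
    Dset _ _ (hypo_sub M (fun u => f (Phi u))) pt d2 ->
    d1.2 = 0 -> d2.2 = 0 -> d1.1 + d2.1 = k *: (u - p) -> 0 < k -> False.
  move=> d1 d2 k [e1 [e10 H1]] [e2 [e20 H2]] z1 z2 hs k0.
  set e := Num.min e1 e2.
  have e0 : 0 < e by rewrite lt_min e10.
  have [ee1 ee2] : e <= e1 /\ e <= e2 by split; rewrite /e ge_min lexx ?orbT.
  case: Hu => [[a' [ha' la']] | [b' [hb' lb']]].
  - have side : forall s, 0 <= s -> s <= e ->
        exists r, Rf (p - s *: d1.1) = Some r /\ r <= a.
      move=> s s0 se; have [_ /eleS [r [hr lr]]] := H1 s s0 (le_trans se ee1).
      exists r; split => //; move: lr; rewrite /= z1 sc mulr0 subr0 //.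
    have [t [t0 te [r [hr lr]]]] := @gen_lemma _ _ _ p u d1.1 _ _ _ _ hR hRp ha' la' k0 e0 side.
    have qe : k *: (u - p) - d1.1 = d2.1 by rewrite -hs [d1.1 + _]addrC addrK.
    rewrite qe in hr.
    have [P2 _] := H2 t (ltW t0) (le_trans te ee2).
    have := K (p + t *: d2.1, (r : R^o)) _ _ P2 erefl.
    rewrite /= z2 sc mulr0 addr0 => /(_ _).
    have : epi Rf (p + t *: d2.1, (r : R^o)) by rewrite /epi /= hr /=.
    move=> hh /(_ hh); lra.
  - have side : forall s, 0 <= s -> s <= e ->
        exists r, f (Phi (p - s *: d2.1)) = Some r /\ r <= b.
      move=> s s0 se; have [_ [r [hr lr]]] := H2 s s0 (le_trans se ee2).
      exists r; split => //; move: lr; rewrite /= z2 sc mulr0 subr0 /M; lra.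
    have [t [t0 te [r [hr lr]]]] := @gen_lemma _ _ _ p u d2.1 _ _ _ _ hg hfp hb' lb' k0 e0 side.
    have qe : k *: (u - p) - d2.1 = d1.1 by rewrite -hs addrK.
    rewrite qe in hr.
    have [P1 _] := H1 t (ltW t0) (le_trans te ee1).
    have hh : hypo_sub M (fun u => f (Phi u)) (p + t *: d1.1, ((M - r) : R^o)).
      by exists r; split => //=.
    have := K _ _ P1 hh erefl.
    rewrite /= z1 sc mulr0 addr0 /M; lra.
exists (fun i : 'I_2 => if val i == 0%N then ((0:V), (1:R^o)) else (u - p, (0:R^o))).
move=> c [u1 [u2 [Du1 Du2 Hs]]].
rewrite big_ord_recl big_ord1 /= in Hs.
have h1 := congr1 fst Hs; have h2 := congr1 snd Hs; simpl in h1, h2.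
rewrite (horE _ Du1) (horH _ Du2) !sc mulr1 mulr0 !addr0 in h2.
rewrite scaler0 add0r in h1.
have c1z : c (lift ord0 ord0) = 0.
  case: (ltrgtP (c (lift ord0 ord0)) 0) => hc //.
  - exfalso; apply: (core (- u1) (- u2) (- c (lift ord0 ord0))).
    + exact: Dopp (DE _ Du1).
    + exact: Dopp (DH _ Du2).
    + by rewrite /= (horE _ Du1) oppr0.
    + by rewrite /= (horH _ Du2) oppr0.
    + by rewrite /= -opprD -h1 scaleNr.
    + by rewrite oppr_gt0.
  - exfalso; apply: (core u1 u2 (c (lift ord0 ord0))) => //.
    + exact: DE.
    + exact: DH.
    + exact: horE.
    + exact: horH.
move=> [[|[|j]] hi].
- by rewrite (_ : Ordinal hi = ord0) //; apply: val_inj.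
- by rewrite (_ : Ordinal hi = lift ord0 ord0) //; apply: val_inj.
- by [].
Qed.
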